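(* Let $G$ be a proper interval graph on vertex set $[n]$, labeled so that for all $i<j$, $\{i,j\}\in E(G)$ implies the induced subgraph on $\{i,\dots,j\}$ is a clique, and let $t\ge2$, $I=I_t(G)$. Then $I$ satisfies the $\ell$-exchange property with respect to the sorting order, namely: let $u_1,\dots,u_N$ and $v_1,\dots,v_N$ be elements of $\mathcal{G}(I)$ such that $(u_i,u_j)$ and $(v_i,v_j)$ are sorted pairs for all $i<j$, and suppose that for some $q\le n-1$ one has $\deg_{x_r}(u_1\cdots u_N)=\deg_{x_r}(v_1\cdots v_N)$ for $r=1,\dots,q-1$ and $\deg_{x_q}(u_1\cdots u_N)<\deg_{x_q}(v_1\cdots v_N)$. Then there exist an index $k$ and an integer $j$ with $q<j\le n$ and $x_j\in\mathrm{supp}(u_k)$ such that $x_q u_k/x_j\in I$.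
   Context: $I_t(G)\subset K[x_1,\dots,x_n]$ is the ideal generated by all squarefree monomials $x_{i_1}\cdots x_{i_t}$ with $\{i_1,\dots,i_t\}$ an independent set of $G$; $\mathcal{G}(I)$ is its minimal monomial generating set. For monomials $u,v$ of degree $d$, write $uv=x_{i_1}\cdots x_{i_{2d}}$ with $i_1\le\cdots\le i_{2d}$, and set $\mathrm{sort}(u,v)=(x_{i_1}x_{i_3}\cdots x_{i_{2d-1}},\ x_{i_2}x_{i_4}\cdots x_{i_{2d}})$; $(u,v)$ is a sorted pair if $\mathrm{sort}(u,v)=(u,v)$. (With respect to the sorting order on $T=K[y_u:u\in\mathcal{G}(I)]$, the standard monomials of the toric ideal of $K[u:u\in\mathcal{G}(I)]$ are exactly the products $y_{u_1}\cdots y_{u_N}$ with $(u_i,u_j)$ sorted for all $i<j$, which is the form used above.) A proper interval graph is a graph whose vertices can be assigned real intervals, none properly containing another, such that two vertices are adjacent iff their intervals intersect; such a labeling of the vertices exists for every proper interval graph. *)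

(* Defs.v *)
From mathcomp Require Import all_boot all_order all_algebra.
Set Implicit Arguments. Unset Strict Implicit. Unset Printing Implicit Defensive.
Import Order.TTheory GRing.Theory Num.Theory.

(* Vertex x_{i+1} of [n] is represented by i : 'I_n (0-based labels). *)

Definition simple_graph (n : nat) (e : rel 'I_n) : Prop :=
  (forall i, ~~ e i i) /\ (forall i j, e i j = e j i).

Definition proper_interval_graph (n : nat) (e : rel 'I_n) : Prop :=
  exists a b : 'I_n -> rat,
    (forall i, (a i <= b i)%R) /\
    (forall i j, ~ ((a i <= a j)%R /\ (b j <= b i)%R /\ (a i != a j \/ b i != b j))) /\
    (forall i j, i != j -> (e i j <-> ((a i <= b j)%R /\ (a j <= b i)%R))).

Definition proper_interval_labeling (n : nat) (e : rel 'I_n) : Prop :=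
  forall i j : 'I_n, i < j -> e i j ->
    forall a b : 'I_n, i <= a <= j -> i <= b <= j -> a != b -> e a b.

Definition independent (n : nat) (e : rel 'I_n) (S : {set 'I_n}) : bool :=
  [forall x in S, forall y in S, ~~ e x y].

(* minimal generators of I_t(G): squarefree monomials x_S, S independent, |S| = t *)
Definition gen_It (n : nat) (e : rel 'I_n) (t : nat) (S : {set 'I_n}) : bool :=
  independent e S && (#|S| == t).

(* a monomial is an exponent vector; it lies in I_t(G) iff it is divisible
   by some generator x_S *)
Definition in_It (n : nat) (e : rel 'I_n) (t : nat) (m : 'I_n -> nat) : Prop :=
  exists S : {set 'I_n}, gen_It e t S /\ forall i, i \in S -> 0 < m i.

Definition mon_of_set (n : nat) (S : {set 'I_n}) : 'I_n -> nat :=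
  fun i => nat_of_bool (i \in S).

(* monomials of degree d as multisets of variables (seq 'I_n);
   sort(u,v): odd and even positions of the sorted product *)
Definition odd_pos (T : Type) (s : seq T) : seq T :=
  mask [seq ~~ odd i | i <- iota 0 (size s)] s.
Definition even_pos (T : Type) (s : seq T) : seq T :=
  mask [seq odd i | i <- iota 0 (size s)] s.

Definition sortm (n : nat) (u v : seq 'I_n) : seq 'I_n * seq 'I_n :=
  let s := sort (fun x y : 'I_n => (x <= y)%N) (u ++ v) in (odd_pos s, even_pos s).

(* (u,v) sorted pair: sort(u,v) = (u,v) as monomials (i.e. as multisets) *)
Definition sorted_pair (n : nat) (A B : {set 'I_n}) : bool :=
  let p := sortm (enum A) (enum B) in perm_eq p.1 (enum A) && perm_eq p.2 (enum B).

Definition deg_prod (n N : nat) (u : 'I_N -> {set 'I_n}) (r : 'I_n) : nat :=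
  \sum_(k < N) mon_of_set (u k) r.

(* Main.v *)
Require Import Defs.
From mathcomp Require Import all_boot all_order all_algebra.
From mathcomp Require Import zify.
Set Implicit Arguments. Unset Strict Implicit. Unset Printing Implicit Defensive.

Lemma inc_A n (A : {set 'I_n}) : sorted ltn (map val (enum A)).
Proof.
  rewrite -[enum _](eq_filter (mem_enum _)).
  rewrite -(eq_filter (mem_map val_inj _)) -filter_map.
  by rewrite (sorted_filter ltn_trans) // unlock val_ord_enum iota_ltn_sorted.
Qed.

Lemma odd_pos_cons T (x : T) s : odd_pos (x :: s) = x :: even_pos s.
Proof.
  rewrite /odd_pos /even_pos /= -[1]addn0 iotaDl -map_comp.
  by congr (_ :: mask _ _); apply: eq_map => i /=; rewrite negbK.
Qed.

Lemma even_pos_cons T (x : T) s : even_pos (x :: s) = odd_pos s.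
Proof.
  rewrite /odd_pos /even_pos /= -[1]addn0 iotaDl -map_comp.
  by congr (mask _ _); apply: eq_map => i /=.
Qed.

Lemma nth_pos T (x0 : T) s :
  (forall l, nth x0 (odd_pos s) l = nth x0 s l.*2) /\
  (forall l, nth x0 (even_pos s) l = nth x0 s l.*2.+1).
Proof.
  elim: s => [|x s [IH1 IH2]].
    by split => l; rewrite /odd_pos /even_pos /= !nth_nil.
  split => l; rewrite ?odd_pos_cons ?even_pos_cons.
    by case: l => [|l] //=; rewrite IH2 doubleS.
  by rewrite IH1.
Qed.

Lemma pair_le n (x0 : 'I_n) (A B : {set 'I_n}) t :
  sorted_pair A B -> #|A| = t -> #|B| = t -> forall l, l < t ->
  nth 0 (map val (enum A)) l <= nth 0 (map val (enum B)) l /\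
  (l.+1 < t -> nth 0 (map val (enum B)) l <= nth 0 (map val (enum A)) l.+1).
Proof.
  rewrite /sorted_pair /sortm /=.
  set le := (fun x y : 'I_n => (x <= y)%N).
  set s := sort le _.
  have le_tr : transitive le by move=> ? ? ?; apply: leq_trans.
  have le_as : antisymmetric le by move=> ? ? /anti_leq/val_inj.
  have le_tot : total le by move=> ? ?; apply: leq_total.
  have ss : sorted le s by apply: sort_sorted.
  have sE : forall C : {set 'I_n}, sorted le (enum C).
    move=> C; have := inc_A C; rewrite sorted_map => H.
    by apply: sub_sorted H => x y; apply: ltnW.
  move=> /andP[pA pB] cA cB l lt.
  have eA : odd_pos s = enum A.
    apply: (sorted_eq le_tr le_as) => //.
    exact: (subseq_sorted le_tr (mask_subseq _ _) ss).
  have eB : even_pos s = enum B.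
    apply: (sorted_eq le_tr le_as) => //.
    exact: (subseq_sorted le_tr (mask_subseq _ _) ss).
  have sz : size s = t.*2 by rewrite size_sort size_cat -!cardE cA cB addnn.
  have [E1 E2] := nth_pos x0 s.
  have szA : size (enum A) = t by rewrite -cardE.
  have szB : size (enum B) = t by rewrite -cardE.
  have hA : forall m, nth x0 (enum A) m = nth x0 s m.*2 by move=> m; rewrite -E1 eA.
  have hB : forall m, nth x0 (enum B) m = nth x0 s m.*2.+1 by move=> m; rewrite -E2 eB.
  have mono := sorted_leq_nth le_tr (fun x => leqnn _) x0 ss.
  split.
    rewrite !(nth_map x0) ?szA ?szB // hA hB.
    apply: mono; rewrite ?inE ?sz //; lia.
  move=> lt2; rewrite !(nth_map x0) ?szA ?szB // hA hB.
  apply: mono; rewrite ?inE ?sz //; lia.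
Qed.

Lemma count_iota_sum (a : pred nat) N :
  count a (iota 0 N) = \sum_(k < N) a k.
Proof.
  elim: N => [|N IH]; first by rewrite big_ord0.
  by rewrite -addn1 iotaD count_cat IH addn1 big_ord_recr /= add0n addn0.
Qed.

Lemma count_grid (f : nat -> nat -> nat) N t r : 0 < N ->
  count (pred1 r) (mkseq (fun p => f (p %% N) (p %/ N)) (t * N)) =
  \sum_(l < t) \sum_(k < N) (f k l == r).
Proof.
  move=> N0; elim: t => [|t IH]; first by rewrite big_ord0.
  rewrite mulSnr /mkseq iotaD map_cat count_cat.
  rewrite /mkseq in IH; rewrite IH big_ord_recr /=; congr (_ + _).
  rewrite add0n -[t * N]addn0 iotaDl -map_comp count_map count_iota_sum.
  apply: eq_bigr => k _ /=.
  by rewrite modnMDl divnMDl // modn_small // divn_small // addn0.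
Qed.

Lemma sum_nth_count (s : seq nat) r :
  \sum_(l < size s) (nth 0 s l == r) = count (pred1 r) s.
Proof.
  elim: s => [|x s IH]; first by rewrite big_ord0.
  by rewrite /= big_ord_recl /= IH.
Qed.

Lemma split_sorted (s : seq nat) m : sorted leq s ->
  s = filter (fun x => x < m) s ++ filter (fun x => m <= x) s.
Proof.
  elim: s => [|x s IH] //= Hs.
  have Hs' : sorted leq s by apply: path_sorted Hs.
  case: (ltnP x m) => Hx /=.
    by rewrite -IH.
  have Hall : all (fun y => x <= y) s.
    by move: Hs; rewrite (path_sortedE leq_trans); case/andP.
  rewrite (@eq_in_filter _ _ pred0) ?filter_pred0 /=; last first.
    by move=> y /(allP Hall) Hy /=; apply/negbTE; rewrite -leqNgt (leq_trans Hx).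
  rewrite (@eq_in_filter _ _ predT) ?filter_predT //.
  by move=> y /(allP Hall) Hy /=; rewrite (leq_trans Hx).
Qed.

Lemma count_ltS (s : seq nat) m :
  count (fun x => x < m.+1) s = count (fun x => x < m) s + count (pred1 m) s.
Proof.
  elim: s => [|x s IH] //=; rewrite IH ltnS leq_eqVlt.
  case: (ltngtP x m) => //= _; lia.
Qed.

Definition Mx n N (w : 'I_N.+1 -> {set 'I_n}) k l :=
  nth 0 (map val (enum (w (inord k)))) l.
Definition Sx n N t (w : 'I_N.+1 -> {set 'I_n}) :=
  mkseq (fun p => Mx w (p %% N.+1) (p %/ N.+1)) (t * N.+1).

Lemma sizeE n (A : {set 'I_n}) : size (map val (enum A)) = #|A|.
Proof. by rewrite size_map -cardE. Qed.

Lemma Sx_sorted n (x0 : 'I_n) N t (w : 'I_N.+1 -> {set 'I_n}) :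
  (forall k, #|w k| = t) ->
  (forall i j : 'I_N.+1, i < j -> sorted_pair (w i) (w j)) ->
  sorted leq (Sx t w).
Proof.
  move=> Hc Hs; apply/(sortedP 0) => p; rewrite size_mkseq => Hp.
  rewrite !nth_mkseq; try lia.
  set k := p %% N.+1; set l := p %/ N.+1.
  have Hk : k < N.+1 by rewrite ltn_mod.
  have Hpe : p = l * N.+1 + k by rewrite /l /k -divn_eq.
  have Hlt : l < t by rewrite /l ltn_divLR //; lia.
  case: (ltnP k N) => HkN.
    have -> : p.+1 = l * N.+1 + k.+1 by rewrite {1}Hpe addnS.
    rewrite modnMDl divnMDl // modn_small // divn_small // addn0.
    have Hij : (inord k : 'I_N.+1) < (inord k.+1 : 'I_N.+1).
      by rewrite inordK // inordK // ltnS.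
    have [H1 _] := pair_le x0 (Hs _ _ Hij) (Hc _) (Hc _) Hlt.
    exact: H1.
  have HkN' : k = N by apply/eqP; rewrite eqn_leq HkN andbT -ltnS.
  have -> : p.+1 = l.+1 * N.+1 + 0 by rewrite {1}Hpe HkN' addn0 mulSnr addnS.
  rewrite modnMDl divnMDl // mod0n div0n addn0 HkN'.
  have Hl1 : l.+1 < t.
    have : l.+1 * N.+1 <= p.+1 by rewrite Hpe HkN' mulSnr addnS.
    move=> H; rewrite -(ltn_pmul2r (ltn0Sn N)); lia.
  case: (posnP N) => [N0|Npos].
    rewrite /Mx.
    have -> : (inord N : 'I_N.+1) = inord 0 by apply/ord_inj; rewrite !inordK // N0.
    set A := w (inord 0).
    have := sorted_leq_nth leq_trans leqnn 0 (sub_sorted (fun x y => @ltnW x y) (inc_A A)).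
    by apply; rewrite ?inE ?sizeE ?Hc //; lia.
  have Hij : (inord 0 : 'I_N.+1) < (inord N : 'I_N.+1) by rewrite inordK // inordK.
  have [_ H2] := pair_le x0 (Hs _ _ Hij) (Hc _) (Hc _) Hlt.
  exact: H2.
Qed.

Lemma Sx_size n N t (w : 'I_N.+1 -> {set 'I_n}) : size (Sx t w) = t * N.+1.
Proof. by rewrite size_mkseq. Qed.

Lemma Sx_count n N t (w : 'I_N.+1 -> {set 'I_n}) (r : 'I_n) :
  (forall k, #|w k| = t) ->
  count (pred1 (val r)) (Sx t w) = deg_prod w r.
Proof.
  move=> Hc; rewrite /Sx count_grid // exchange_big /deg_prod.
  apply: eq_bigr => k _ /=.
  rewrite /Mx inord_val -(Hc k) -sizeE sum_nth_count count_uniq_mem; last first.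
    by rewrite (map_inj_uniq val_inj) enum_uniq.
  by rewrite /mon_of_set (mem_map val_inj) mem_enum.
Qed.

Unset Implicit Arguments.
Theorem proposition2p4 (n : nat) (e : rel 'I_n) (t : nat)
  (He : simple_graph e) (Hpig : proper_interval_graph e)
  (Hlab : proper_interval_labeling e) (Ht : 2 <= t)
  (N : nat) (u v : 'I_N -> {set 'I_n})
  (Hu : forall k, gen_It e t (u k)) (Hv : forall k, gen_It e t (v k))
  (Husort : forall i j : 'I_N, i < j -> sorted_pair (u i) (u j))
  (Hvsort : forall i j : 'I_N, i < j -> sorted_pair (v i) (v j))
  (q : 'I_n) (Hq : q.+2 <= n)
  (Heq : forall r : 'I_n, r < q -> deg_prod u r = deg_prod v r)
  (Hlt : deg_prod u q < deg_prod v q) :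
  exists (k : 'I_N) (j : 'I_n), q < j /\ j \in u k /\
    in_It e t (fun i => mon_of_set (u k) i + nat_of_bool (i == q) - nat_of_bool (i == j)).
Proof.
  case: N u v Hu Hv Husort Hvsort Heq Hlt => [|N] u v Hu Hv Husort Hvsort Heq Hlt.
    by rewrite /deg_prod !big_ord0 in Hlt.
  have Hcu : forall k, #|u k| = t by move=> k; case/andP: (Hu k) => _ /eqP.
  have Hcv : forall k, #|v k| = t by move=> k; case/andP: (Hv k) => _ /eqP.
  have indU : forall k x y, x \in u k -> y \in u k -> ~~ e x y.
    move=> k x y Hx Hy; case/andP: (Hu k) => /forallP/(_ x)/implyP/(_ Hx)/forallP/(_ y)/implyP/(_ Hy) H _.
    exact: H.
  have indV : forall k x y, x \in v k -> y \in v k -> ~~ e x y.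
    move=> k x y Hx Hy; case/andP: (Hv k) => /forallP/(_ x)/implyP/(_ Hx)/forallP/(_ y)/implyP/(_ Hy) H _.
    exact: H.
  set Su := Sx t u; set Sv := Sx t v.
  have sSu : sorted leq Su by apply: (Sx_sorted q).
  have sSv : sorted leq Sv by apply: (Sx_sorted q).
  have zSu : size Su = t * N.+1 by apply: Sx_size.
  have zSv : size Sv = t * N.+1 by apply: Sx_size.
  set q' := val q.
  have F1 : filter (fun x => x < q') Su = filter (fun x => x < q') Sv.
    apply: (sorted_eq leq_trans anti_leq); [exact: (sorted_filter leq_trans _ sSu) | exact: (sorted_filter leq_trans _ sSv) |].
    apply/allP => x _ /=; apply/eqP; rewrite !count_filter.
    case: (ltnP x q') => Hx.
      have Hxn : x < n by apply: ltn_trans Hx (ltn_ord q).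
      rewrite !(@eq_count _ _ (pred1 (val (Ordinal Hxn)))); last first.
        by move=> y /=; case: eqP => // ->; rewrite Hx.
        by move=> y /=; case: eqP => // ->; rewrite Hx.
      by rewrite !Sx_count // Heq.
    rewrite !(@eq_count _ _ pred0) ?count_pred0 //.
      by move=> y /=; case: eqP => // ->; rewrite ltnNge Hx.
    by move=> y /=; case: eqP => // ->; rewrite ltnNge Hx.
  set c := count (fun x => x < q') Su.
  have cv : count (fun x => x < q') Sv = c by rewrite /c -!size_filter F1.
  set a := count (pred1 q') Su.
  set b := count (pred1 q') Sv.
  have ab : a < b by rewrite /a /b !Sx_count.
  have bN : b <= N.+1.
    rewrite /b Sx_count // /deg_prod.
    apply: (@leq_trans (\sum_(k < N.+1) 1)); last by rewrite sum1_card card_ord.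
    by apply: leq_sum => k _; rewrite /mon_of_set; case: (_ \in _).
  have cbs : c + b <= t * N.+1 by rewrite -zSv -cv -count_ltS count_size.
  set p := c + a.
  have Hp : p < t * N.+1 by rewrite /p; lia.
  have Sup : q' < nth 0 Su p.
    rewrite (split_sorted q'.+1 sSu) nth_cat size_filter count_ltS -/c -/a ltnn subnn.
    have Hm : nth 0 [seq x <- Su | q'.+1 <= x] 0 \in [seq x <- Su | q'.+1 <= x].
      apply: mem_nth; rewrite size_filter.
      have := congr1 size (split_sorted q'.+1 sSu); rewrite size_cat !size_filter count_ltS -/c -/a zSu.
      move: Hp; rewrite /p; move: (t * N.+1) => T; move=> H1 H2; rewrite H2 in H1 *; move: H1; move: (count _ Su) => X; lia.
    by move: Hm; rewrite mem_filter => /andP[].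
  have Svp : nth 0 Sv p = q'.
    apply/eqP; rewrite eqn_leq; apply/andP; split.
      rewrite (split_sorted q'.+1 sSv) nth_cat size_filter count_ltS cv.
      have -> : p < c + b by rewrite /p; lia.
      have Hm : nth 0 [seq x <- Sv | x < q'.+1] p \in [seq x <- Sv | x < q'.+1].
        by apply: mem_nth; rewrite size_filter count_ltS cv /p; lia.
      by move: Hm; rewrite mem_filter => /andP[].
    rewrite (split_sorted q' sSv) nth_cat size_filter cv.
    have -> : (p < c) = false by rewrite /p; lia.
    have Hm : nth 0 [seq x <- Sv | q' <= x] (p - c) \in [seq x <- Sv | q' <= x].
      apply: mem_nth; rewrite size_filter.
      have := congr1 size (split_sorted q' sSv); rewrite size_cat !size_filter cv zSv.
      move: Hp ab bN; rewrite /p; move: (t * N.+1) (count _ Sv) => T X; lia.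
    by move: Hm; rewrite mem_filter => /andP[].
  have Low : forall p', p' < c -> nth 0 Su p' = nth 0 Sv p' /\ nth 0 Su p' < q'.
    move=> p' Hp'.
    rewrite (split_sorted q' sSu) (split_sorted q' sSv) !nth_cat !size_filter cv -/c Hp' F1.
    split => //.
    have Hm : nth 0 [seq x <- Sv | x < q'] p' \in [seq x <- Sv | x < q'].
      by apply: mem_nth; rewrite size_filter cv.
    by move: Hm; rewrite mem_filter => /andP[].
  set k := p %% N.+1; set l := p %/ N.+1.
  have Hk : k < N.+1 by rewrite ltn_mod.
  have Hpe : p = l * N.+1 + k by rewrite /l /k -divn_eq.
  have Hlt' : l < t by rewrite /l ltn_divLR.
  have aN : a < N.+1 by move: ab bN; clear; lia.
  have MxS : forall (w : 'I_N.+1 -> {set 'I_n}) m, m < t ->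
      Mx w k m = nth 0 (Sx t w) (m * N.+1 + k).
    move=> w m Hm; rewrite /Sx nth_mkseq; last first.
      have H := leq_mul Hm (leqnn N.+1); rewrite mulSnr in H.
      by move: H Hk; move: (m * N.+1) (t * N.+1) => X Y; lia.
    by rewrite modnMDl divnMDl // modn_small // divn_small // addn0.
  have Mup : q' < Mx u k l by rewrite MxS // -Hpe.
  have Mvp : Mx v k l = q' by rewrite MxS // -Hpe.
  have Mlow : forall m, m < l -> Mx u k m = Mx v k m /\ Mx u k m < q'.
    move=> m Hm; rewrite !MxS; try (move: Hm Hlt'; clear; lia).
    apply: Low.
    have H := leq_mul Hm (leqnn N.+1); rewrite mulSnr in H.
    move: H Hpe aN Hk; rewrite /p; move: (m * N.+1) (l * N.+1) => X Y; lia.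
  set K : 'I_N.+1 := inord k.
  have MxE : forall w m, Mx w k m = nth 0 (map val (enum (w K))) m by [].
  set eu := enum (u K); set ev := enum (v K).
  have szu : size eu = t by rewrite -cardE Hcu.
  have szv : size ev = t by rewrite -cardE Hcv.
  have nu : forall m, m < t -> val (nth q eu m) = Mx u k m.
    by move=> m Hm; rewrite MxE (nth_map q) ?szu.
  have nv : forall m, m < t -> val (nth q ev m) = Mx v k m.
    by move=> m Hm; rewrite MxE (nth_map q) ?szv.
  set j := nth q eu l.
  have Hqj : q < j by rewrite nu.
  have jin : j \in u K by rewrite -mem_enum mem_nth ?szu.
  have incu : forall m1 m2, m1 < m2 -> m2 < t -> val (nth q eu m1) < val (nth q eu m2).
    move=> m1 m2 H1 H2; rewrite !nu //; last by move: H1 H2; clear; lia.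
    rewrite !MxE; apply: (sorted_ltn_nth ltn_trans 0 (inc_A (u K))); rewrite ?inE ?sizeE ?Hcu //.
    by move: H1 H2; clear; lia.
  have idx : forall y, y \in u K -> exists2 m, m < t & y = nth q eu m.
    move=> y Hy; exists (index y eu).
      by rewrite -szu index_mem mem_enum.
    by rewrite nth_index // mem_enum.
  have qnot : q \notin u K.
    apply/negP => /idx [m Hm Hqm].
    case: (ltngtP m l) => Hml.
    - have [_ H] := Mlow m Hml; rewrite -nu // -Hqm in H; by rewrite ltnn in H.
    - have := incu l m Hml Hm; rewrite -Hqm -/j => H.
      by move: (ltn_trans H Hqj); rewrite ltnn.
    - by move: Hqj; rewrite Hqm Hml ltnn.
  have evl : nth q ev l = q by apply: val_inj; rewrite /= nv.
  have evm : forall m, m < l -> nth q ev m = nth q eu m.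
    move=> m Hm; have Hmt : m < t by move: Hm Hlt'; clear; lia.
    apply: val_inj; rewrite /= nv // nu //; by case: (Mlow m Hm).
  have qv : q \in v K by rewrite -mem_enum -evl mem_nth ?szv.
  have key : forall y, y \in u K -> y != j -> ~~ e q y.
    move=> y Hy Hyj; have [m Hm Hym] := idx y Hy.
    case: (ltngtP m l) => Hml.
    - apply: (indV K) => //.
      by rewrite Hym -evm // -mem_enum mem_nth ?szv.
    - apply/negP => Hqy.
      have Hjy : val j < val y by rewrite Hym; apply: incu.
      have Hqy' : q < y := ltn_trans Hqj Hjy.
      have := Hlab q y Hqy' Hqy j y.
      rewrite (ltnW Hqj) (ltnW Hjy) (ltnW Hqy') leqnn /= => /(_ isT isT).
      have Hne : j != y by rewrite neq_ltn; apply/orP; left.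
      move=> /(_ Hne) Hjy'.
      by move: (indU K j y jin Hy); rewrite Hjy'.
    - by move: Hyj; rewrite Hym Hml eqxx.
  exists K, j; split => //; split => //.
  exists (q |: (u K :\ j)); split.
    rewrite /gen_It; apply/andP; split.
      apply/forallP => x; apply/implyP => Hx; apply/forallP => y; apply/implyP => Hy.
      move: Hx Hy; rewrite !in_setU1 !in_setD1 => Hx Hy.
      case/orP: Hx => [/eqP -> | /andP [Hxj Hx]]; case/orP: Hy => [/eqP -> | /andP [Hyj Hy]].
      - by have [H _] := He; apply: H.
      - exact: key.
      - by have [_ H] := He; rewrite H; apply: key.
      - exact: indU Hx Hy.
    have Hc := cardsD1 j (u K); rewrite jin Hcu in Hc.
    apply/eqP; rewrite cardsU1 in_setD1 (negbTE qnot) andbF /=.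
    by rewrite Hc.
  have Hqj' : (q == j) = false by apply/negbTE; rewrite neq_ltn Hqj.
  move=> i; rewrite in_setU1 in_setD1 /mon_of_set => /orP [/eqP -> | /andP [Hij Hi]].
    by rewrite (negbTE qnot) eqxx Hqj'.
  by rewrite Hi (negbTE Hij) subn0 addn_gt0.
Qed.
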